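(* Let $\mu=(p,q,r,s)\in\mathbb{C}^4$. Then: (1) there exists a constant $l=l(\mu)>0$ such that for every $\mu$-Markoff map $\phi\in\Phi_\mu$ the set $\Omega_\phi(l)$ is non-empty; (2) there exists a constant $\alpha=\alpha(\mu)\ge 0$ such that for every $\phi\in\Phi_\mu$ and every $k\ge 2+\alpha$, the set $\Omega_\phi(k)$ is connected, i.e. the union of the regions belonging to $\Omega_\phi(k)$ is a connected subset of the plane.
   Context: Let $\Sigma$ be a countably infinite simplicial tree, properly embedded in the plane, all of whose vertices have degree $3$. A complementary region is the closure of a connected component of the complement of $\Sigma$ in the plane; $\Omega$ denotes the set of complementary regions and $E(\Sigma)$ the set of edges. Every edge $e$ is the intersection of exactly two regions $X,Y$, and its two endpoints lie on two further regions $Z,W$ respectively; we write $e\leftrightarrow(X,Y;Z,W)$. Exactly three regions meet at each vertex. Fix a coloring $\mathcal C:\Omega\cup E(\Sigma)\to\{1,2,3\}$ such that for every $e\leftrightarrow(X,Y;Z,W)$ we have $\mathcal C(e)=\mathcal C(Z)=\mathcal C(W)$ and $\mathcal C(e),\mathcal C(X),\mathcal C(Y)$ pairwise distinct; let $\Omega_i$, $E_i$ be the regions/edges of color $i$. For $\mu=(p,q,r,s)\in\mathbb{C}^4$, a $\mu$-Markoff map is a function $\phi:\Omega\to\mathbb{C}$ such that (i) at every vertex, if $X\in\Omega_1,Y\in\Omega_2,Z\in\Omega_3$ are the three regions meeting there and $x=\phi(X),y=\phi(Y),z=\phi(Z)$, then $x^2+y^2+z^2+xyz=px+qy+rz+s$;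 (ii) for $e\in E_1$ with $e\leftrightarrow(Y,Z;X,X')$: $\phi(X)+\phi(X')=p-\phi(Y)\phi(Z)$; for $e\in E_2$ with $e\leftrightarrow(X,Z;Y,Y')$: $\phi(Y)+\phi(Y')=q-\phi(X)\phi(Z)$; for $e\in E_3$ with $e\leftrightarrow(X,Y;Z,Z')$: $\phi(Z)+\phi(Z')=r-\phi(X)\phi(Y)$. $\Phi_\mu$ denotes the set of $\mu$-Markoff maps. For $k\ge0$, $\Omega_\phi(k)=\{X\in\Omega: |\phi(X)|\le k\}$. *)

(* Defs.v *)
From HB Require Import structures.
From mathcomp Require Import all_boot all_order all_algebra.
From mathcomp Require Import reals complex.
Set Implicit Arguments. Unset Strict Implicit. Unset Printing Implicit Defensive.
Import Order.TTheory GRing.Theory Num.Theory.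
Local Open Scope ring_scope.

(* Combinatorial model of the planar trivalent tree Sigma via its dual, the
   Farey graph.  Complementary regions <-> Q u {oo}, encoded as primitive
   integer vectors (a,b) with gcd 1, normalized by b > 0, or (a,b) = (1,0). *)
Definition is_region (v : int * int) : bool :=
  (gcdz v.1 v.2 == 1%N) && ((0 < v.2) || ((v.2 == 0) && (v.1 == 1))).

Record region := Region { rvec :> int * int ; rvecP : is_region rvec }.

(* Two regions share an edge of Sigma iff |ad - bc| = 1 (Farey neighbours). *)
Definition adj (X Y : region) : Prop :=
  `|(X : int * int).1 * (Y : int * int).2 - (X : int * int).2 * (Y : int * int).1| = 1.

(* Vertices of Sigma <-> triples of pairwise adjacent regions.
   An edge e <-> (X,Y) with adj X Y; its two endpoints lie on the two distinct
   regions Z, W adjacent to both X and Y : e <-> (X,Y;Z,W). *)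
Definition edge_quad (X Y Z W : region) : Prop :=
  [/\ adj X Y, adj X Z /\ adj Y Z, adj X W /\ adj Y W & Z <> W].

(* Colours 1,2,3 are represented by 0,1,2 : 'I_3.  The colour of the edge
   e <-> (X,Y;Z,W) is C(Z) (= C(W)). *)
Definition good_coloring (C : region -> 'I_3) : Prop :=
  forall X Y Z W, edge_quad X Y Z W ->
    [/\ C Z = C W, C X <> C Y, C X <> C Z & C Y <> C Z].

Definition mu_coef (K : Type) (p q r : K) (i : 'I_3) : K :=
  if val i == 0%N then p else if val i == 1%N then q else r.

Definition markoff_map (R : realType) (C : region -> 'I_3) (p q r s : R[i])
    (phi : region -> R[i]) : Prop :=
  (forall X Y Z : region, adj X Y -> adj X Z -> adj Y Z ->
     val (C X) = 0%N -> val (C Y) = 1%N -> val (C Z) = 2%N ->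
     phi X ^+ 2 + phi Y ^+ 2 + phi Z ^+ 2 + phi X * phi Y * phi Z
       = p * phi X + q * phi Y + r * phi Z + s) /\
  (forall Y Z X X' : region, edge_quad Y Z X X' ->
     phi X + phi X' = mu_coef p q r (C X) - phi Y * phi Z).

Definition Omega_le (R : realType) (phi : region -> R[i]) (k : R) : region -> Prop :=
  fun X => `|phi X| <= (k%:C)%C.

Fixpoint chain_in (S : region -> Prop) (X : region) (s : seq region) : Prop :=
  if s is Y :: s' then adj X Y /\ S Y /\ chain_in S Y s' else True.

(* The union of a set S of regions is connected in the plane iff any two
   regions of S are joined by a chain of regions of S, consecutive ones
   sharing an edge. *)
Definition regions_connected (S : region -> Prop) : Prop :=
  forall X Y, S X -> S Y ->
    exists s : seq region, chain_in S X s /\ last X s = Y.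

(* Main.v *)
Require Import Defs.
From HB Require Import structures.
From mathcomp Require Import all_boot all_order all_algebra.
From mathcomp Require Import reals complex.
From mathcomp Require Import ring lra zify.
Import Order.TTheory GRing.Theory Num.Theory.
Set Implicit Arguments. Unset Strict Implicit. Unset Printing Implicit Defensive.
Local Open Scope ring_scope.

Definition vadd (u v : int * int) : int * int := (u.1 + v.1, u.2 + v.2).
Definition vsub (u v : int * int) : int * int := (u.1 - v.1, u.2 - v.2).
Definition vopp (u : int * int) : int * int := (- u.1, - u.2).
Definition vlin (a b : int) (u v : int * int) : int * int :=
  (a * u.1 + b * v.1, a * u.2 + b * v.2).
Definition det (u v : int * int) : int := u.1 * v.2 - u.2 * v.1.
Definition prim (w : int * int) : Prop := gcdz w.1 w.2 = 1%N.

Definition normalize (w : int * int) : int * int :=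
  if (w.2 < 0) || ((w.2 == 0) && (w.1 < 0)) then vopp w else w.

HB.instance Definition _ := [isSub for rvec].

Lemma base_prf : is_region (1%Z, 0%Z). Proof. by []. Qed.
Definition base : region := Region base_prf.
Definition reg (w : int * int) : region := insubd base (normalize w).

Lemma region_eq (X Y : region) : rvec X = rvec Y -> X = Y.
Proof.
case: X => x hx; case: Y => y hy /= E; subst y; congr Region; apply: eq_irrelevance.
Qed.

Lemma prim_norm w : prim w -> is_region (normalize w).
Proof.
case: w => a b; rewrite /prim /normalize /is_region /vopp /= => g.
have h0 : b = 0 -> `|a| = 1.
  by move=> E; move: g; rewrite E gcdz0 abszE.
case: ifP => H /=; rewrite ?gcdNz ?gcdzN g eqxx /=.
  move/orP: H => [H|/andP[/eqP H1 H2]]; first lia.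
  have := h0 H1; lia.
case: (ltgtP 0 b) => Hb; [by []| by move: H; rewrite Hb; lia|].
have := h0 (esym Hb); move: H; rewrite -Hb eqxx /=; lia.
Qed.

Lemma reg_val w : prim w -> rvec (reg w) = normalize w.
Proof. by move=> h; rewrite /reg insubdK //; apply: prim_norm. Qed.

Lemma normalize_pm w : normalize w = w \/ normalize w = vopp w.
Proof. by rewrite /normalize; case: ifP; [right|left]. Qed.

Lemma region_prim (X : region) : prim X.
Proof. by case: X => x /= /andP[/eqP]. Qed.

Lemma regK (X : region) : reg X = X.
Proof.
apply: region_eq; rewrite reg_val; last exact: region_prim.
case: X => [[a b]] /= /andP[_ H]; rewrite /normalize /=.
case: ifP => // K; exfalso; move: K H => /= K H. lia.
Qed.

Lemma prim_opp w : prim w -> prim (vopp w).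
Proof. by rewrite /prim /vopp /= gcdNz gcdzN. Qed.

Lemma prim_nz w : prim w -> w <> (0, 0).
Proof. by move=> h E; move: h; rewrite E /prim /= gcdz0. Qed.

Lemma reg_opp w : prim w -> reg (vopp w) = reg w.
Proof.
move=> h; apply: region_eq; rewrite reg_val; last exact: prim_opp.
rewrite reg_val //.
have := prim_nz h; case: w {h} => a b /= nz.
rewrite /normalize /vopp /=.
have nz' : ~ (a = 0 /\ b = 0) by move=> [Ha Hb]; apply: nz; rewrite Ha Hb.
do 2 case: ifP => /= ?; try congr pair; lia.
Qed.

Lemma dvd_one (g : int) : (g %| 1)%Z -> 0 <= g -> g = 1.
Proof. rewrite dvdz1 => /eqP h hg. lia. Qed.

Lemma dvd_abs1 (g a : int) : (g %| a)%Z -> `|a| = 1 -> (g %| 1)%Z.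
Proof. move=> h; case: (ger0P a) => _ E. by move: h; rewrite E. by move: h; rewrite -rpredN E. Qed.

Lemma prim_of_det u v : `|det u v| = 1 -> prim v /\ prim u.
Proof.
move=> h; split; rewrite /prim; apply: dvd_one => //; apply: dvd_abs1 h; rewrite /det; apply: rpredB.
- by apply: dvdz_mull; apply: dvdz_gcdr.
- by apply: dvdz_mull; apply: dvdz_gcdl.
- by apply: dvdz_mulr; apply: dvdz_gcdl.
- by apply: dvdz_mulr; apply: dvdz_gcdr.
Qed.

Lemma abs_det_reg_l w y : prim w -> `|det (reg w) y| = `|det w y|.
Proof.
move=> h; rewrite /det reg_val //; case: (normalize_pm w) => ->; rewrite // /vopp /=.
by rewrite -normrN; congr `|_|; ring.
Qed.

Lemma abs_det_reg_r w y : prim w -> `|det y (reg w)| = `|det y w|.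
Proof.
move=> h; rewrite /det reg_val //; case: (normalize_pm w) => ->; rewrite // /vopp /=.
by rewrite -normrN; congr `|_|; ring.
Qed.

Lemma adj_reg u v : `|det u v| = 1 -> adj (reg u) (reg v).
Proof.
move=> h; have [pv pu] := prim_of_det h.
rewrite /adj -/(det _ _) abs_det_reg_l // abs_det_reg_r //.
Qed.

Lemma det_uadd u v : det u (vadd u v) = det u v.
Proof. rewrite /det /vadd /=; ring. Qed.
Lemma det_vadd u v : det v (vadd u v) = - det u v.
Proof. rewrite /det /vadd /=; ring. Qed.
Lemma det_usub u v : det u (vsub u v) = - det u v.
Proof. rewrite /det /vsub /=; ring. Qed.
Lemma det_vsub u v : det v (vsub u v) = - det u v.
Proof. rewrite /det /vsub /=; ring. Qed.
Lemma det_swap u v : det v u = - det u v.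
Proof. rewrite /det; ring. Qed.
Lemma det_opp_r u v : det u (vopp v) = - det u v.
Proof. rewrite /det /vopp /=; ring. Qed.
Lemma det_opp_l u v : det (vopp u) v = - det u v.
Proof. rewrite /det /vopp /=; ring. Qed.

Lemma unimod_comp (A : int * int) : prim A -> exists E, det A E = 1.
Proof.
move=> pA; have [u0 [v0 H]] := Bezoutz A.1 A.2.
exists (- v0, u0); rewrite /det /=; move: H; rewrite pA => H; nia.
Qed.

Lemma decomp (A B E : int * int) : det A E = 1 -> B = vlin (det B E) (det A B) A E.
Proof.
move=> h; rewrite /vlin /det; case: B => b1 b2 /=.
move: h; rewrite /det => h.
congr (_, _).
- transitivity (b1 * (A.1 * E.2 - A.2 * E.1)); first by rewrite h mulr1.
  ring.
- transitivity (b2 * (A.1 * E.2 - A.2 * E.1)); first by rewrite h mulr1.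
  ring.
Qed.

Lemma dvd_prim (g : int) (B : int * int) : prim B -> (g %| B.1)%Z -> (g %| B.2)%Z -> `|g| = 1.
Proof.
move=> pB h1 h2; have : (g %| gcdz B.1 B.2)%Z by rewrite dvdz_gcd h1.
rewrite pB dvdz1 => /eqP; lia.
Qed.

Lemma det0_eq (A B : region) : det A B = 0 -> A = B.
Proof.
move=> h0; have pA := region_prim A; have pB := region_prim B.
have [E hE] := unimod_comp pA.
have dB := decomp B hE; rewrite h0 in dB.
set t := det B E in dB.
have ht : `|t| = 1.
  apply: (dvd_prim pB); rewrite dB /vlin /= mul0r addr0; exact: dvdz_mulr.
have E1 : (B : int * int).1 = t * (A : int * int).1 by rewrite dB /vlin /= mul0r addr0.
have E2 : (B : int * int).2 = t * (A : int * int).2 by rewrite dB /vlin /= mul0r addr0.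
have [_ hA] := andP (rvecP A); have [_ hB] := andP (rvecP B).
apply: region_eq.
move: E1 E2 hA hB; case: (rvec A) => a1 a2; case: (rvec B) => b1 b2 /= E1 E2 hA hB.
move/orP: hA => [hA|/andP[/eqP hA1 /eqP hA2]]; move/orP: hB => [hB|/andP[/eqP hB1 /eqP hB2]].
- case: (ger0P t) ht => _ ht.
  + by rewrite E1 E2 ht !mul1r.
  + exfalso; have Ht : t = -1 by lia. move: E2 hB; rewrite Ht; lia.
- exfalso; move: E2 hA; rewrite hB1; nia.
- exfalso; move: E2 hB; rewrite hA1 mulr0; lia.
- by rewrite hA1 hB1 hA2 hB2.
Qed.

Lemma split_lemma (A B : region) : (2 <= absz (det A B))%N ->
  exists (X : int * int) (a b : nat),
  `|det A X| = 1 /\ (0 < a)%N /\ (0 < b)%N /\ coprime a b /\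
      rvec B = vlin a%:Z b%:Z X (vadd X A) /\
      (absz (det X B) < absz (det A B))%N /\
      (absz (det (vadd X A) B) < absz (det A B))%N.
Proof.
move=> h2.
have pA := region_prim A; have pB := region_prim B.
have [E hE] := unimod_comp pA.
have dB := decomp B hE.
set t := det B E in dB; set δ := det A B in dB h2 *.
pose D : int := `|δ|.
pose E' := if 0 <= δ then E else vopp E.
have hE' : `|det A E'| = 1.
  by rewrite /E'; case: ifP => _; rewrite ?det_opp_r ?normrN hE.
have dB' : rvec B = vlin t D A E'.
  rewrite dB /vlin /E' /D; case: (ger0P δ) => hd /=; congr (_, _); ring.
have Dpos : 0 < D by rewrite /D; lia.
pose m := (t %/ D)%Z; pose ρ := (t %% D)%Z.
have tE : t = m * D + ρ by exact: divz_eq.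
have r0 : 0 <= ρ by apply: modz_ge0; lia.
have r1 : ρ < D by apply: ltz_pmod.
have rnz : ρ != 0.
  apply/eqP => r00.
  have : `|D| = 1.
    apply: (dvd_prim pB); rewrite dB' /vlin /= tE r00 addr0.
    - by apply: rpredD; [rewrite mulrAC; apply: dvdz_mull | apply: dvdz_mulr]; apply: dvdzz.
    - by apply: rpredD; [rewrite mulrAC; apply: dvdz_mull | apply: dvdz_mulr]; apply: dvdzz.
  rewrite /D; lia.
pose X := vlin m 1 A E'.
pose a := absz (D - ρ); pose b := absz ρ.
have ha : a%:Z = D - ρ by rewrite /a; lia.
have hb : b%:Z = ρ by rewrite /b; lia.
set σ := det A E' in hE'.
have dXB : det X B = - ρ * σ.
  rewrite dB' /det /X /vlin /σ /det /= tE; ring.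
have dYB : det (vadd X A) B = (D - ρ) * σ.
  rewrite dB' /det /X /vlin /vadd /σ /det /= tE; ring.
have hBab : rvec B = vlin a%:Z b%:Z X (vadd X A).
  rewrite dB' ha hb /vlin /X /vadd /=; congr (_, _); rewrite tE; ring.
have sg : σ = 1 \/ σ = -1 by lia.
exists X, a, b; split; [|split; [|split; [|split; [|split; [|split]]]]].
- have -> : det A X = σ by rewrite /X /σ /det /vlin /=; ring.
  exact: hE'.
- lia.
- lia.
- have g1 : (gcdn a b %| a)%N by apply: dvdn_gcdl.
  have g2 : (gcdn a b %| b)%N by apply: dvdn_gcdr.
  have hg : `|(gcdn a b)%:Z| = 1.
    by apply: (dvd_prim pB); rewrite hBab /vlin /=; apply: rpredD; apply: dvdz_mulr; rewrite dvdzE.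
  by rewrite /coprime; move: hg; rewrite ger0_norm // => -[->].
- exact: hBab.
- rewrite dXB; case: sg => ->; rewrite /D in r1; lia.
- rewrite dYB; case: sg => ->; rewrite /D in r1 r0 rnz *; lia.
Qed.

Section Norm.
Variable R : realType.
Definition nc (z : R[i]) : R := Num.sqrt (complex.Re z ^+ 2 + complex.Im z ^+ 2).
Lemma normE z : `|z| = (nc z)%:C%C.
Proof. by rewrite normc_def. Qed.
Lemma nc_ge0 z : 0 <= nc z.
Proof. exact: sqrtr_ge0. Qed.
Lemma nc_mul x y : nc (x * y) = nc x * nc y.
Proof. by apply: complexI; rewrite -normE rmorphM /= -!normE normrM. Qed.
Lemma nc_add x y : nc (x + y) <= nc x + nc y.
Proof. by rewrite -lecR rmorphD /= -!normE ler_normD. Qed.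
Lemma nc_opp x : nc (- x) = nc x.
Proof. by apply: complexI; rewrite -!normE normrN. Qed.
Lemma nc_sub x y : nc (x - y) <= nc x + nc y.
Proof. by rewrite -(nc_opp y) nc_add. Qed.
Lemma nc_subr x y : nc x - nc y <= nc (x - y).
Proof. have := nc_add (x - y) y; rewrite subrK; lra. Qed.
End Norm.

Section RL.
Variable R : realType.
Lemma pm (a b : R) : 0 <= a -> 0 <= b -> 0 <= a * b. Proof. exact: mulr_ge0. Qed.

Lemma grow_real (k M x y z w : R) : 0 <= M -> 2 + M <= k -> k < x -> k < y -> 0 <= z ->
  z <= w -> x * y - M <= w + z -> k < w /\ y <= x * w - M - y.
Proof.
move=> hM hk hx hy hz hzw hE.
have h1 := @pm (x - (2 + M)) y ltac:(lra) ltac:(lra).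
have h2 := @pm M (y - 2) ltac:(lra) ltac:(lra).
have hw : y <= w by lra.
split; first lra.
have h3 := @pm (x - 2) w ltac:(lra) ltac:(lra).
lra.
Qed.

Lemma grow0 (k M x y z w : R) : 0 <= M -> 2 + M <= k -> k < x -> k < y -> z <= k ->
  x * y - M <= w + z -> k < w /\ z <= w.
Proof.
move=> hM hk hx hy hz hE.
have h1 := @pm (x - k) (y - k) ltac:(lra) ltac:(lra).
have h2 := @pm (k - (2 + M)) k ltac:(lra) ltac:(lra).
have h3 := @pm M (k - 1) ltac:(lra) ltac:(lra).
have h4 : 0 < (x - k) * k by apply: mulr_gt0; lra.
have h5 := @pm (y - k) k ltac:(lra) ltac:(lra).
split; lra.
Qed.

Lemma key_contra (M S L x y z w : R) : 0 <= M -> 0 <= S -> L = 6 + 5 * M + 2 * S ->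
  L < x -> x <= y -> y <= z -> z <= w -> x * y - M <= z + w ->
  z * w <= x ^+ 2 + y ^+ 2 + M * x + M * y + S -> False.
Proof.
move=> hM hS hL hx hxy hyz hzw hE hP.
rewrite !expr2 in hP.
have y1 : 1 <= y by lra.
have a1 := @pm y (2 * w - (x * y - M)) ltac:(lra) ltac:(lra).
have a1' := @pm (z - y) (2 * w) ltac:(lra) ltac:(lra).
have a2 := @pm (y - x) (y + x) ltac:(lra) ltac:(lra).
have a3 := @pm M (y - x) ltac:(lra) ltac:(lra).
have a4 := @pm (M * y) (y - 1) ltac:(apply: mulr_ge0; lra) ltac:(lra).
have yy := @pm (y - 1) (y + 1) ltac:(lra) ltac:(lra).
have a5 := @pm S (y * y - 1) ltac:(lra) ltac:(lra).
have a6 := @pm (x - (4 + 5 * M + 2 * S)) (y * y) ltac:(lra) ltac:(apply: mulr_ge0; lra).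
have a7 : 0 < (x - (4 + 5 * M + 2 * S)) * (y * y) by apply: mulr_gt0; [lra| apply: mulr_gt0; lra].
lra.
Qed.

Lemma key_step (M S L x y z w : R) : 0 <= M -> 0 <= S -> L = 6 + 5 * M + 2 * S ->
  L < x -> x <= y -> y <= z -> 0 <= w -> w < z -> x * y - M <= z + w ->
  z * w <= x ^+ 2 + y ^+ 2 + M * x + M * y + S -> w <= z - 1.
Proof.
move=> hM hS hL hx hxy hyz hw hzw hE hP; subst L.
rewrite !expr2 in hP.
suff : w <= y - 1 by lra.
rewrite leNgt; apply/negP => hw1.
have y1 : 1 <= y by lra.
have a2 := @pm (y - x) (y + x) ltac:(lra) ltac:(lra).
have a3 := @pm M (y - x) ltac:(lra) ltac:(lra).
have b1 := @pm (w - (y - 1)) z ltac:(lra) ltac:(lra).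
have b2 := @pm (y - 1) (2 * z - (x * y - M)) ltac:(lra) ltac:(lra).
have b3 := @pm (y - 1) ((x - (6 + 5 * M + 2 * S)) * y) ltac:(lra) ltac:(apply: mulr_ge0; lra).
have b4 := @pm (2 + 5 * M + 2 * S) ((y - (6 + 5 * M + 2 * S)) * y) ltac:(lra) ltac:(apply: mulr_ge0; lra).
have b5 := @pm S (y - 1) ltac:(lra) ltac:(lra).
have b8 := @pm (M * y) (5 + 5 * M + 2 * S) ltac:(apply: mulr_ge0; lra) ltac:(lra).
have b11 := @pm (6 + 5 * M + 2 * S) (y - 1) ltac:(lra) ltac:(lra).
have b9 := @pm S ((6 + 5 * M + 2 * S) * y - 1) ltac:(lra) ltac:(lra).
lra.
Qed.
End RL.

Lemma transfer (K : comNzRingType) (a b c d : K) : a - b = c - d -> c = d -> a = b.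
Proof. by move=> E F; apply/eqP; rewrite -subr_eq0 E F subrr. Qed.

Lemma transfer2 (K : comNzRingType) (a b c d : K) : a - b = d - c -> c = d -> a = b.
Proof. by move=> E F; apply/eqP; rewrite -subr_eq0 E F subrr. Qed.

Section Markoff.
Variable R : realType.
Variable C : region -> 'I_3.
Hypothesis hC : good_coloring C.
Variables p q r s : R[i].
Variable phi : region -> R[i].
Hypothesis hphi : markoff_map C p q r s phi.

Definition M := nc p + nc q + nc r.
Lemma M_ge0 : 0 <= M.
Proof. rewrite /M; have := nc_ge0 p; have := nc_ge0 q; have := nc_ge0 r; lra. Qed.
Lemma nc_mu i : nc (mu_coef p q r i) <= M.
Proof.
rewrite /M /mu_coef; have := nc_ge0 p; have := nc_ge0 q; have := nc_ge0 r.
by case: ifP => _; [|case: ifP => _]; lra.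
Qed.

Definition f w := nc (phi (reg w)).
Lemma f_ge0 w : 0 <= f w. Proof. exact: nc_ge0. Qed.

Lemma f_opp w : prim w -> f (vopp w) = f w.
Proof. by move=> h; rewrite /f reg_opp. Qed.

Lemma edge_quad_vec u v : `|det u v| = 1 ->
  edge_quad (reg u) (reg v) (reg (vadd u v)) (reg (vsub u v)).
Proof.
move=> h.
have h1 : `|det u (vadd u v)| = 1 by rewrite det_uadd.
have h2 : `|det v (vadd u v)| = 1 by rewrite det_vadd normrN.
have h3 : `|det u (vsub u v)| = 1 by rewrite det_usub normrN.
have h4 : `|det v (vsub u v)| = 1 by rewrite det_vsub normrN.
split.
- exact: adj_reg.
- by split; apply: adj_reg.
- by split; apply: adj_reg.
- move=> E.
  have pa : prim (vadd u v) by case: (prim_of_det h1).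
  have pb : prim (vsub u v) by case: (prim_of_det h3).
  have := congr1 rvec E; rewrite !reg_val //.
  case: (normalize_pm (vadd u v)) => ->; case: (normalize_pm (vsub u v)) => ->;
    rewrite /vadd /vsub /vopp => -[E1 E2].
  + have [H1 H2] : v.1 = 0 /\ v.2 = 0 by lia.
    by move: h; rewrite /det H1 H2 !mulr0 subrr.
  + have [H1 H2] : u.1 = 0 /\ u.2 = 0 by lia.
    by move: h; rewrite /det H1 H2 !mul0r subrr.
  + have [H1 H2] : u.1 = 0 /\ u.2 = 0 by lia.
    by move: h; rewrite /det H1 H2 !mul0r subrr.
  + have [H1 H2] : v.1 = 0 /\ v.2 = 0 by lia.
    by move: h; rewrite /det H1 H2 !mulr0 subrr.
Qed.

Lemma edge_vec u v : `|det u v| = 1 ->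
  phi (reg (vadd u v)) + phi (reg (vsub u v)) =
  mu_coef p q r (C (reg (vadd u v))) - phi (reg u) * phi (reg v).
Proof. by move=> h; apply: hphi.2; apply: edge_quad_vec. Qed.

Lemma edge_bound u v : `|det u v| = 1 -> f u * f v - M <= f (vadd u v) + f (vsub u v).
Proof.
move=> h; have E := edge_vec h.
have : phi (reg u) * phi (reg v) = mu_coef p q r (C (reg (vadd u v))) -
   (phi (reg (vadd u v)) + phi (reg (vsub u v))) by rewrite E opprB addrC subrK.
move/(congr1 (@nc R)); rewrite nc_mul => E2.
have := nc_sub (mu_coef p q r (C (reg (vadd u v)))) (phi (reg (vadd u v)) + phi (reg (vsub u v))).
have := nc_add (phi (reg (vadd u v))) (phi (reg (vsub u v))).
have := nc_mu (C (reg (vadd u v))).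
rewrite /f -E2; lra.
Qed.

Lemma adj_sym X Y : adj X Y -> adj Y X.
Proof. by rewrite /adj -!/(det _ _) det_swap normrN. Qed.

Ltac vperm hV A B D eX eY eZ :=
  solve [apply: (transfer _ (hV A B D _ _ _ _ _ _)); by [ring | rewrite ?eX ?eY ?eZ | assumption]].

Lemma vertex_gen X Y Z : adj X Y -> adj X Z -> adj Y Z ->
  val (C X) <> val (C Y) -> val (C X) <> val (C Z) -> val (C Y) <> val (C Z) ->
  phi X ^+ 2 + phi Y ^+ 2 + phi Z ^+ 2 + phi X * phi Y * phi Z =
  mu_coef p q r (C X) * phi X + mu_coef p q r (C Y) * phi Y + mu_coef p q r (C Z) * phi Z + s.
Proof.
move=> aXY aXZ aYZ; have aYX := adj_sym aXY; have aZX := adj_sym aXZ; have aZY := adj_sym aYZ.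
have hV := hphi.1; rewrite /mu_coef.
case eX: (C X) => [[|[|[|nx]]] hx]; case eY: (C Y) => [[|[|[|ny]]] hy];
  case eZ: (C Z) => [[|[|[|nz]]] hz] => //= h1 h2 h3;
  first [ by [] | by case: h1 | by case: h2 | by case: h3
        | vperm hV X Y Z eX eY eZ | vperm hV X Z Y eX eY eZ | vperm hV Y X Z eX eY eZ
        | vperm hV Y Z X eX eY eZ | vperm hV Z X Y eX eY eZ | vperm hV Z Y X eX eY eZ ].
Qed.

Lemma prod_vec u v : `|det u v| = 1 ->
  phi (reg (vadd u v)) * phi (reg (vsub u v)) =
  phi (reg u) ^+ 2 + phi (reg v) ^+ 2 - mu_coef p q r (C (reg u)) * phi (reg u)
   - mu_coef p q r (C (reg v)) * phi (reg v) - s.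
Proof.
move=> h; have hq := edge_quad_vec h.
have [_ cXY cXZ cYZ] := hC hq.
case: hq => aXY [aXZ aYZ] _ _.
have V := vertex_gen aXY aXZ aYZ (fun e => cXY (val_inj e)) (fun e => cXZ (val_inj e))
   (fun e => cYZ (val_inj e)).
have E := edge_vec h.
have Ew : phi (reg (vsub u v)) = mu_coef p q r (C (reg (vadd u v))) - phi (reg u) * phi (reg v)
   - phi (reg (vadd u v)) by rewrite -E; ring.
rewrite Ew; apply: (transfer2 _ V); ring.
Qed.

Lemma prod_bound u v : `|det u v| = 1 ->
  f (vadd u v) * f (vsub u v) <= f u ^+ 2 + f v ^+ 2 + M * f u + M * f v + nc s.
Proof.
move=> h; rewrite /f -nc_mul prod_vec //.
set x := phi (reg u); set y := phi (reg v).
set a := mu_coef p q r _; set b := mu_coef p q r _.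
have ha : nc a <= M by apply: nc_mu.
have hb : nc b <= M by apply: nc_mu.
have e1 := nc_sub (x ^+ 2 + y ^+ 2 - a * x - b * y) s.
have e2 := nc_sub (x ^+ 2 + y ^+ 2 - a * x) (b * y).
have e3 := nc_sub (x ^+ 2 + y ^+ 2) (a * x).
have e4 := nc_add (x ^+ 2) (y ^+ 2).
rewrite !expr2 !nc_mul in e4 *.
rewrite nc_mul in e3; rewrite nc_mul in e2.
have gx := nc_ge0 x; have gy := nc_ge0 y.
have m1 : nc a * nc x <= M * nc x by apply: ler_wpM2r.
have m2 : nc b * nc y <= M * nc y by apply: ler_wpM2r.
lra.
Qed.

Lemma f_reg (X : region) : f X = nc (phi X).
Proof. by rewrite /f regK. Qed.

Lemma OmegaE k (X : region) : Omega_le phi k X <-> nc (phi X) <= k.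
Proof. by rewrite /Omega_le normE lecR. Qed.

Definition Inv k u v := `|det u v| = 1 /\ k < f u /\ k < f v /\ f (vsub u v) <= f (vadd u v).

Lemma inv_w k u v : 2 + M <= k -> Inv k u v -> k < f (vadd u v).
Proof.
move=> hk [h [hu [hv hzw]]].
have E := edge_bound h.
have := @grow_real R k M (f u) (f v) (f (vsub u v)) (f (vadd u v)) M_ge0 hk hu hv (f_ge0 _) hzw ltac:(lra).
by case.
Qed.

Lemma vec_eq1 u v : vsub u (vadd u v) = vopp v.
Proof. rewrite /vsub /vadd /vopp /=; congr (_, _); ring. Qed.
Lemma vec_eq2 u v : vsub v (vadd u v) = vopp u.
Proof. rewrite /vsub /vadd /vopp /=; congr (_, _); ring. Qed.

Lemma inv_c1 k u v : 2 + M <= k -> Inv k u v -> Inv k u (vadd u v).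
Proof.
move=> hk [h [hu [hv hzw]]].
have E := edge_bound h.
have [hw hy] := @grow_real R k M (f u) (f v) (f (vsub u v)) (f (vadd u v)) M_ge0 hk hu hv (f_ge0 _) hzw ltac:(lra).
have h1 : `|det u (vadd u v)| = 1 by rewrite det_uadd.
have E1 := edge_bound h1.
have [pv pu] := prim_of_det h.
rewrite vec_eq1 f_opp // in E1.
split => //; split => //; split => //.
rewrite vec_eq1 f_opp //; lra.
Qed.

Lemma inv_c2 k u v : 2 + M <= k -> Inv k u v -> Inv k v (vadd u v).
Proof.
move=> hk [h [hu [hv hzw]]].
have E := edge_bound h.
have [hw hy] := @grow_real R k M (f v) (f u) (f (vsub u v)) (f (vadd u v)) M_ge0 hk hv hu (f_ge0 _) hzw ltac:(lra).
have h1 : `|det v (vadd u v)| = 1 by rewrite det_vadd normrN.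
have E1 := edge_bound h1.
have [pv pu] := prim_of_det h.
rewrite vec_eq2 f_opp // in E1.
split => //; split => //; split => //.
rewrite vec_eq2 f_opp //; lra.
Qed.

Lemma descend k : 2 + M <= k -> forall n (a b : nat) u v, (0 < a)%N -> (0 < b)%N -> coprime a b ->
  (a + b <= n)%N -> Inv k u v -> k < f (vlin a%:Z b%:Z u v).
Proof.
move=> hk; elim=> [|n IH] a b u v ha hb cab hn hI; first by lia.
case: (ltngtP a b) => hab.
- have e : vlin a%:Z b%:Z u v = vlin (b - a)%N%:Z a%:Z v (vadd u v).
    have -> : ((b - a)%N : int) = b%:Z - a%:Z by lia.
    rewrite /vlin /vadd /=; congr (_, _); ring.
  rewrite e; apply: IH; try lia; last exact: inv_c2.
  by rewrite /coprime gcdnC -gcdnDl subnKC ?(ltnW hab).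
- have e : vlin a%:Z b%:Z u v = vlin (a - b)%N%:Z b%:Z u (vadd u v).
    have -> : ((a - b)%N : int) = a%:Z - b%:Z by lia.
    rewrite /vlin /vadd /=; congr (_, _); ring.
  rewrite e; apply: IH; try lia; last exact: inv_c1.
  by rewrite /coprime gcdnC -gcdnDl subnKC ?(ltnW hab) // gcdnC.
- subst b; move: cab; rewrite /coprime gcdnn => /eqP a1; subst a.
  have -> : vlin 1%:Z 1%:Z u v = vadd u v by rewrite /vlin /vadd !mul1r.
  exact: inv_w hI.
Qed.

Lemma connect_lem k : 2 + M <= k -> forall n (A B : region), (absz (det A B) <= n)%N ->
  Omega_le phi k A -> Omega_le phi k B ->
  exists sq, chain_in (Omega_le phi k) A sq /\ last A sq = B.
Proof.
move=> hk; elim=> [|n IH] A B hn hA hB.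
  by exists [::]; split => //=; apply: det0_eq; lia.
case: (ltngtP (absz (det A B)) 1) => h1.
- by exists [::]; split => //=; apply: det0_eq; lia.
- have h2 : (2 <= absz (det A B))%N by [].
  have [X [a [b [hAX [ha [hb [cab [hBv [hXB hYB]]]]]]]]] := split_lemma h2.
  have pX : prim X by case: (prim_of_det hAX).
  have hAY : `|det A (vadd X A)| = 1.
    by rewrite -hAX; congr `|_|; rewrite /det /vadd /=; ring.
  have pY : prim (vadd X A) by case: (prim_of_det hAY).
  have pA := region_prim A.
  case: (boolP (nc (phi (reg X)) <= k)) => hX.
    have hd : (absz (det (reg X) B) <= n)%N.
      by have := abs_det_reg_l B pX; lia.
    have [sq [hs1 hs2]] := IH (reg X) B hd (proj2 (OmegaE k (reg X)) hX) hB.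
    exists (reg X :: sq); split => //=; split; last by split => //; apply/OmegaE.
    by rewrite /adj -/(det _ _) abs_det_reg_r.
  case: (boolP (nc (phi (reg (vadd X A))) <= k)) => hY.
    have hd : (absz (det (reg (vadd X A)) B) <= n)%N.
      by have := abs_det_reg_l B pY; lia.
    have [sq [hs1 hs2]] := IH (reg (vadd X A)) B hd (proj2 (OmegaE k _) hY) hB.
    exists (reg (vadd X A) :: sq); split => //=; split; last by split => //; apply/OmegaE.
    by rewrite /adj -/(det _ _) abs_det_reg_r.
  exfalso.
  rewrite -ltNge in hX; rewrite -ltNge in hY.
  have hXY : `|det X (vadd X A)| = 1.
    by rewrite -hAX -normrN; congr `|_|; rewrite /det /vadd /=; ring.
  have E := edge_bound hXY.
  have hz : f (vsub X (vadd X A)) <= k.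
    by rewrite vec_eq1 f_opp // f_reg; apply/OmegaE.
  have [_ hzw] := @grow0 R k M (f X) (f (vadd X A)) (f (vsub X (vadd X A))) (f (vadd X (vadd X A))) M_ge0 hk hX hY hz ltac:(lra).
  have hI : Inv k X (vadd X A) by [].
  have := descend hk (n := (a + b)%N) ha hb cab (leqnn _) hI.
  rewrite -hBv f_reg => hBk.
  by move/OmegaE: hB; lra.
- exists [:: B]; split => //=; split => //.
  by rewrite /adj -/(det _ _); lia.
Qed.

Definition Lb := 6 + 5 * M + 2 * nc s.

Lemma stepA u v : `|det u v| = 1 -> Lb < f u -> Lb < f v -> Lb < f (vadd u v) ->
  f u <= f (vadd u v) -> f v <= f (vadd u v) -> f (vsub u v) <= f (vadd u v) - 1.
Proof.
move=> h hu hv hz h1 h2.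
have E := edge_bound h; have P := prod_bound h.
have hM := M_ge0; have hS := nc_ge0 s.
have hw := f_ge0 (vsub u v).
case: (lerP (f (vadd u v)) (f (vsub u v))) => hzw.
- exfalso; case: (lerP (f u) (f v)) => huv.
  + apply: (@key_contra R M (nc s) Lb (f u) (f v) (f (vadd u v)) (f (vsub u v))) => //; lra.
  + apply: (@key_contra R M (nc s) Lb (f v) (f u) (f (vadd u v)) (f (vsub u v))) => //; lra.
- case: (lerP (f u) (f v)) => huv.
  + apply: (@key_step R M (nc s) Lb (f u) (f v) (f (vadd u v)) (f (vsub u v))) => //; lra.
  + apply: (@key_step R M (nc s) Lb (f v) (f u) (f (vadd u v)) (f (vsub u v))) => //; lra.
Qed.

Definition fsum u v := f u + f v + f (vadd u v).

Lemma progress u v : `|det u v| = 1 ->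
  (exists w, f w <= Lb) \/ (exists u' v', `|det u' v'| = 1 /\ fsum u' v' <= fsum u v - 1).
Proof.
move=> h.
have [pv pu] := prim_of_det h.
case: (lerP (f u) Lb) => hu; first by left; exists u.
case: (lerP (f v) Lb) => hv; first by left; exists v.
case: (lerP (f (vadd u v)) Lb) => hz; first by left; exists (vadd u v).
have caseA : f u <= f (vadd u v) -> f v <= f (vadd u v) ->
  (exists w, f w <= Lb) \/ (exists u' v', `|det u' v'| = 1 /\ fsum u' v' <= fsum u v - 1).
  move=> h1 h2.
  case: (lerP (f (vsub u v)) Lb) => hw; first by left; exists (vsub u v).
  have := stepA h hu hv hz h1 h2 => st.
  right; exists (vsub u v), v; split.
    by rewrite -h; congr `|_|; rewrite /det /vsub /=; ring.
  rewrite /fsum.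
  have -> : vadd (vsub u v) v = u by case: (u) => a b; rewrite /vadd /vsub /=; congr (_, _); ring.
  lra.
have caseB : f (vadd u v) <= f u -> f v <= f u ->
  (exists w, f w <= Lb) \/ (exists u' v', `|det u' v'| = 1 /\ fsum u' v' <= fsum u v - 1).
  move=> h1 h2.
  have h' : `|det (vadd u v) (vopp v)| = 1.
    by rewrite -h -normrN; congr `|_|; rewrite /det /vadd /vopp /=; ring.
  have e1 : vadd (vadd u v) (vopp v) = u by case: (u) => a b; rewrite /vadd /vopp /=; congr (_, _); ring.
  have e2 : vsub (vadd u v) (vopp v) = vadd (vadd u v) v by rewrite /vadd /vsub /vopp /=; congr (_, _); ring.
  case: (lerP (f (vadd (vadd u v) v)) Lb) => hw; first by left; exists (vadd (vadd u v) v).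
  have := @stepA (vadd u v) (vopp v) h'; rewrite e1 e2 f_opp // => st.
  have {st} st := st hz hv hu h1 h2.
  right; exists (vadd u v), v; split.
    by rewrite -h; congr `|_|; rewrite /det /vadd /=; ring.
  rewrite /fsum; lra.
have caseC : f (vadd u v) <= f v -> f u <= f v ->
  (exists w, f w <= Lb) \/ (exists u' v', `|det u' v'| = 1 /\ fsum u' v' <= fsum u v - 1).
  move=> h1 h2.
  have h' : `|det (vopp u) (vadd u v)| = 1.
    by rewrite -h -normrN; congr `|_|; rewrite /det /vadd /vopp /=; ring.
  have e1 : vadd (vopp u) (vadd u v) = v by case: (v) => a b; rewrite /vadd /vopp /=; congr (_, _); ring.
  have pw : prim (vadd u (vadd u v)).
    have : `|det u (vadd u (vadd u v))| = 1.
      by rewrite -h; congr `|_|; rewrite /det /vadd /=; ring.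
    by case/prim_of_det.
  have e2 : vsub (vopp u) (vadd u v) = vopp (vadd u (vadd u v)) by rewrite /vadd /vsub /vopp /=; congr (_, _); ring.
  case: (lerP (f (vadd u (vadd u v))) Lb) => hw; first by left; exists (vadd u (vadd u v)).
  have := @stepA (vopp u) (vadd u v) h'; rewrite e1 e2 !f_opp // => st.
  have {st} st := st hu hz hv h2 h1.
  right; exists u, (vadd u v); split.
    by rewrite -h; congr `|_|; rewrite /det /vadd /=; ring.
  rewrite /fsum; lra.
case: (lerP (f u) (f (vadd u v))) => h1; case: (lerP (f v) (f (vadd u v))) => h2.
- exact: caseA.
- by apply: caseC; lra.
- by apply: caseB; lra.
- case: (lerP (f v) (f u)) => h3; [apply: caseB | apply: caseC]; lra.
Qed.

Lemma part1_aux n : forall u v, `|det u v| = 1 -> fsum u v <= n%:R -> exists w, f w <= Lb.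
Proof.
have hL : 0 < Lb by rewrite /Lb; have := M_ge0; have := nc_ge0 s; lra.
elim: n => [|n IH] u v h hs.
  case: (lerP (f u) Lb) => hu; first by exists u.
  by exfalso; move: hs; rewrite /fsum; have := f_ge0 v; have := f_ge0 (vadd u v); lra.
case: (progress h) => [//|[u' [v' [h' hs']]]].
apply: (IH u' v' h'); move: hs; rewrite -natr1; lra.
Qed.

End Markoff.

Theorem theorem3p1 (R : realType) (C : region -> 'I_3) (hC : good_coloring C)
    (p q r s : R[i]) :
  (exists l : R, 0 < l /\
     forall phi : region -> R[i], markoff_map C p q r s phi ->
       exists X : region, Omega_le phi l X) /\
  (exists alpha : R, 0 <= alpha /\
     forall phi : region -> R[i], markoff_map C p q r s phi ->
       forall k : R, 2 + alpha <= k -> regions_connected (Omega_le phi k)).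
Proof.
split.
- exists (Lb p q r s); split.
    by rewrite /Lb; have := M_ge0 p q r; have := nc_ge0 s; lra.
  move=> phi hphi.
  have hd : `|det (1, 0) (0, 1)| = 1 by [].
  have h0 : 0 <= fsum phi (1, 0) (0, 1).
    by rewrite /fsum; have := f_ge0 phi (1, 0); have := f_ge0 phi (0, 1);
       have := f_ge0 phi (vadd (1, 0) (0, 1)); lra.
  have hs := archi_boundP h0.
  have [w hw] := part1_aux hC hphi hd (ltW hs).
  by exists (reg w); apply/OmegaE.
- exists (M p q r); split; first exact: M_ge0.
  move=> phi hphi k hk X Y hX hY.
  by apply: (connect_lem hphi hk (n := absz (det X Y))) => //.
Qed.
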